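(* Let $\alpha$ be a hinge angle with primary generating triple $(p,q,k)$. Then $$S_\alpha=\bigcup_{Q\in\{0,1,2,3\}}\{(2l+1)\,i^Q(p+qi)\ :\ l\in\mathbb N\},$$ where $\mathbb N=\{0,1,2,\dots\}$.
   Context: Identify $\mathbb Z^2$ with $\mathbb Z[i]$. Let $\mathcal H=\{w\in\mathbb C:\ \Re w\in\mathbb Z+\tfrac12\ \text{or}\ \Im w\in\mathbb Z+\tfrac12\}$. An angle $\alpha\in\mathbb R/2\pi\mathbb Z$ is a hinge angle if there exists $z\in\mathbb Z[i]$ with $ze^{i\alpha}\in\mathcal H$; its set of source points is $S_\alpha=\{z\in\mathbb Z[i]:\ e^{i\alpha}z\in\mathcal H\}$. For integers $p,q,k$ with $(k+\tfrac12)^2<p^2+q^2$, put $\lambda=\sqrt{p^2+q^2-(k+\tfrac12)^2}>0$ and let $\alpha(p,q,k)$ be the unique angle with $e^{i\alpha(p,q,k)}(p+qi)=k+\tfrac12+\lambda i$; such a triple is a generating triple of $\alpha$ if $\alpha(p,q,k)=\alpha$, and it is primary if it minimizes $p^2+q^2$ among the generating triples of $\alpha$ (it is unique). *)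

(* Defs.v *)
(* concrete reals R; Gaussian integers as pairs (a,b) : Z*Z  (a+bi). *)
From Stdlib Require Import Reals ZArith Lra.
Open Scope R_scope.

(* Multiplication by e^{i alpha} of the complex number x + y i, as a pair (Re, Im). *)
Definition rot_re (alpha x y : R) : R := x * cos alpha - y * sin alpha.
Definition rot_im (alpha x y : R) : R := x * sin alpha + y * cos alpha.

Definition half_int (x : R) : Prop := exists n : Z, x = IZR n + / 2.

Definition in_H (x y : R) : Prop := half_int x \/ half_int y.

Definition source_point (alpha : R) (a b : Z) : Prop :=
  in_H (rot_re alpha (IZR a) (IZR b)) (rot_im alpha (IZR a) (IZR b)).

Definition hinge_angle (alpha : R) : Prop := exists a b : Z, source_point alpha a b.

Definition gen_triple (alpha : R) (p q k : Z) : Prop :=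
  (IZR k + / 2) ^ 2 < IZR p ^ 2 + IZR q ^ 2 /\
  rot_re alpha (IZR p) (IZR q) = IZR k + / 2 /\
  rot_im alpha (IZR p) (IZR q) = sqrt (IZR p ^ 2 + IZR q ^ 2 - (IZR k + / 2) ^ 2).

Definition primary_triple (alpha : R) (p q k : Z) : Prop :=
  gen_triple alpha p q k /\
  forall p' q' k' : Z, gen_triple alpha p' q' k' -> (p ^ 2 + q ^ 2 <= p' ^ 2 + q' ^ 2)%Z.

Definition mul_i (z : Z * Z) : Z * Z := (- snd z, fst z)%Z.
Definition mul_iQ (Q : nat) (z : Z * Z) : Z * Z := Nat.iter Q mul_i z.
Definition zscale (c : Z) (z : Z * Z) : Z * Z := (c * fst z, c * snd z)%Z.

(* Main.v *)
Require Import Defs.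
From Stdlib Require Import Reals ZArith Lra Lia Psatz.
Open Scope Z_scope.
Lemma no_sq (t : Z) : forall v A, (4*t+3)*v*v = A*A -> v = 0.
Proof.
  assert (G: forall n v A, (Z.abs_nat v < n)%nat -> (4*t+3)*v*v = A*A -> v = 0).
  { induction n; intros v A Hn H; [lia|].
    destruct (Z.Even_or_Odd v) as [[v' Hv]|[v' Hv]];
    destruct (Z.Even_or_Odd A) as [[a' Ha]|[a' Ha]]; subst.
    - assert (H2: 4*((4*t+3)*v'*v') = 4*(a'*a')) by (transitivity ((4*t+3)*(2*v')*(2*v')); [ring| rewrite H; ring]).
      assert (E: (4*t+3)*v'*v' = a'*a') by lia.
      destruct (Z.eq_dec v' 0) as [->|Hn0]; [lia|]. rewrite !Zabs2Nat.abs_nat_spec in *.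
      assert (v' = 0) by (apply (IHn v' a'); [lia|exact E]). lia.
    - assert ((4*t+3)*(2*v')*(2*v') = 2*(2*((4*t+3)*v'*v'))) by ring.
      assert ((2*a'+1)*(2*a'+1) = 2*(2*(a'*a'+a'))+1) by ring. lia.
    - assert ((4*t+3)*(2*v'+1)*(2*v'+1) = 4*(t*(4*v'*v'+4*v'+1) + 3*v'*v'+3*v') + 3) by ring.
      assert ((2*a')*(2*a') = 4*(a'*a')) by ring. lia.
    - assert ((4*t+3)*(2*v'+1)*(2*v'+1) = 4*(t*(4*v'*v'+4*v'+1) + 3*v'*v'+3*v') + 3) by ring.
      assert ((2*a'+1)*(2*a'+1) = 4*(a'*a'+a')+1) by ring. lia. }
  intros v A. apply (G (S (Z.abs_nat v))). lia.
Qed.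
Close Scope Z_scope.
Open Scope R_scope.

Lemma re_case alpha p q k a b m :
  primary_triple alpha p q k ->
  IZR a * cos alpha - IZR b * sin alpha = IZR m + / 2 ->
  exists j, a = ((2*j+1)*p)%Z /\ b = ((2*j+1)*q)%Z.
Proof.
  intros [[H1 [H2 H3]] Hprim] Hm.
  unfold rot_re, rot_im in *.
  set (c := cos alpha) in *. set (s := sin alpha) in *.
  set (K := IZR k + /2) in *.
  set (NR := IZR p ^ 2 + IZR q ^ 2) in *.
  set (L := sqrt (NR - K^2)) in *.
  assert (Lsq : L * L = NR - K^2) by (apply sqrt_sqrt; lra).
  assert (Lpos : 0 < L) by (apply sqrt_lt_R0; lra).
  assert (Hc : NR * c = IZR p * K + IZR q * L) by (rewrite <- H2, <- H3; unfold NR; ring).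
  assert (Hs : NR * s = IZR p * L - IZR q * K) by (rewrite <- H2, <- H3; unfold NR; ring).
  set (u := (a*p + b*q)%Z). set (v := (a*q - b*p)%Z).
  set (N := (p*p+q*q)%Z).
  assert (HN : IZR N = NR) by (unfold N, NR; rewrite plus_IZR, !mult_IZR; ring).
  assert (E1 : K * IZR u + L * IZR v = NR * (IZR m + /2)).
  { rewrite <- Hm. unfold u, v. rewrite minus_IZR, !plus_IZR, !mult_IZR.
    replace (NR * (IZR a * c - IZR b * s)) with (IZR a * (NR * c) - IZR b * (NR * s)) by ring.
    rewrite Hc, Hs. ring. }
  set (A := ((2*m+1)*N - (2*k+1)*u)%Z).
  assert (E2 : 2 * L * IZR v = IZR A).
  { unfold A. rewrite minus_IZR, !mult_IZR, plus_IZR, plus_IZR, mult_IZR, mult_IZR, HN.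
    unfold K in E1. lra. }
  assert (Hv : v = 0%Z).
  { apply (no_sq (N - k*k - k - 1) v A). apply eq_IZR.
    rewrite !mult_IZR. rewrite <- E2.
    replace (2 * L * IZR v * (2 * L * IZR v)) with (4 * (L*L) * (IZR v * IZR v)) by ring.
    rewrite Lsq. rewrite plus_IZR, mult_IZR, !minus_IZR, !mult_IZR, HN. unfold K. field. }
  assert (E3 : ((2*k+1)*u = (2*m+1)*N)%Z).
  { apply eq_IZR. rewrite !mult_IZR, !plus_IZR, !mult_IZR, HN.
    rewrite Hv in E1. unfold K in E1. simpl in E1. lra. }
  assert (Ea : (a * N = p * u)%Z).
  { assert (a * N = p * u + q * v)%Z by (unfold N, u, v; ring). rewrite Hv in H; lia. }
  assert (Eb : (b * N = q * u)%Z).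
  { assert (b * N = q * u - p * v)%Z by (unfold N, u, v; ring). rewrite Hv in H; lia. }
  assert (Npos : (0 < N)%Z).
  { apply lt_IZR. rewrite HN. assert (0 <= K^2) by nra. lra. }
  assert (dpos : (0 < Z.gcd u N)%Z).
  { pose proof (Z.gcd_nonneg u N). destruct (Z.eq_dec (Z.gcd u N) 0) as [e|e]; [|lia].
    apply Z.gcd_eq_0 in e. lia. }
  set (d := Z.gcd u N) in *.
  destruct (Z.gcd_divide_l u N) as [u' Hu]. destruct (Z.gcd_divide_r u N) as [N' HN'].
  fold d in Hu, HN'.
  assert (g1 : Z.gcd u' N' = 1%Z).
  { pose proof (Z.gcd_mul_mono_l_nonneg u' N' d (Z.lt_le_incl _ _ dpos)) as G.
    replace (d*u')%Z with u in G by lia. replace (d*N')%Z with N in G by lia.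
    fold d in G. rewrite <- (Z.mul_1_r d) in G at 1. apply Z.mul_reg_l in G; lia. }
  assert (N'pos : (0 < N')%Z) by (subst N; apply (Z.mul_pos_cancel_r _ d); lia).
  assert (dnz : d <> 0%Z) by lia.
  assert (Ea' : (a * N' = p * u')%Z).
  { apply (Z.mul_reg_r _ _ d dnz). rewrite <- !Z.mul_assoc, <- HN', <- Hu. exact Ea. }
  assert (Eb' : (b * N' = q * u')%Z).
  { apply (Z.mul_reg_r _ _ d dnz). rewrite <- !Z.mul_assoc, <- HN', <- Hu. exact Eb. }
  assert (E3' : ((2*k+1) * u' = (2*m+1) * N')%Z).
  { apply (Z.mul_reg_r _ _ d dnz). rewrite <- !Z.mul_assoc, <- HN', <- Hu. exact E3. }
  assert (g2 : Z.gcd N' u' = 1%Z) by (rewrite Z.gcd_comm; exact g1).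
  destruct (Z.gauss N' u' p) as [p0 Hp0]; [exists a; lia | exact g2 |].
  destruct (Z.gauss N' u' q) as [q0 Hq0]; [exists b; lia | exact g2 |].
  destruct (Z.gauss N' u' (2*k+1)) as [t Ht]; [exists (2*m+1)%Z; lia | exact g2 |].
  assert (N'nz : N' <> 0%Z) by lia.
  assert (Ha : a = (p0 * u')%Z).
  { apply (Z.mul_reg_r _ _ N' N'nz). rewrite Ea', Hp0. ring. }
  assert (Hb : b = (q0 * u')%Z).
  { apply (Z.mul_reg_r _ _ N' N'nz). rewrite Eb', Hq0. ring. }
  destruct (Z.eq_dec N' 1) as [N1|N1].
  { subst N'. destruct (Z.Even_or_Odd u') as [[e He]|[j Hj]]; [subst u'; lia|].
    exists j. rewrite Ha, Hb, Hp0, Hq0, Hj. split; ring. }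
  exfalso.
  destruct (Z.Even_or_Odd t) as [[e He]|[k0 Hk0]]; [subst t; lia|].
  set (n := IZR N').
  assert (n1 : 1 < n) by (apply IZR_lt; lia).
  assert (Rp : IZR p = IZR p0 * n) by (unfold n; rewrite Hp0, mult_IZR; ring).
  assert (Rq : IZR q = IZR q0 * n) by (unfold n; rewrite Hq0, mult_IZR; ring).
  set (K0 := IZR k0 + /2).
  assert (RK : K = K0 * n).
  { unfold K, K0, n. assert (IZR (2*k+1) = IZR (t*N')) by (rewrite Ht; reflexivity).
    rewrite plus_IZR, !mult_IZR, Hk0, plus_IZR, mult_IZR in H. lra. }
  set (N0 := IZR p0 ^ 2 + IZR q0 ^ 2).
  assert (RN : NR = N0 * n^2) by (unfold NR, N0; rewrite Rp, Rq; ring).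
  assert (T1 : K0 ^ 2 < N0).
  { apply (Rmult_lt_reg_r (n^2)); [nra|]. rewrite <- RN.
    replace (K0^2 * n^2) with (K^2) by (rewrite RK; ring). exact H1. }
  assert (T2 : IZR p0 * c - IZR q0 * s = K0).
  { apply (Rmult_eq_reg_r n); [|lra]. rewrite <- RK, <- H2, Rp, Rq. ring. }
  assert (T3 : IZR p0 * s + IZR q0 * c = sqrt (N0 - K0^2)).
  { replace (N0 - K0^2) with ((L/n)^2).
    - rewrite sqrt_pow2; [|apply Rlt_le, Rdiv_lt_0_compat; lra].
      apply (Rmult_eq_reg_r n); [|lra]. field_simplify; [|lra]. rewrite <- H3, Rp, Rq. ring.
    - apply (Rmult_eq_reg_r (n^2)); [|nra]. field_simplify; [|lra].
      replace (L^2) with (L*L) by ring. rewrite Lsq, RN, RK. ring. }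
  assert (G : gen_triple alpha p0 q0 k0).
  { unfold gen_triple, rot_re, rot_im. fold c s K0. fold N0. auto. }
  pose proof (Hprim _ _ _ G) as P.
  rewrite !Z.pow_2_r in P.
  assert (EN : N = ((p0*p0+q0*q0) * (N'*N'))%Z) by (unfold N; rewrite Hp0, Hq0; ring).
  assert (EP : (p*p+q*q = (p0*p0+q0*q0) * (N'*N'))%Z) by (rewrite Hp0, Hq0; ring).
  assert (S0 : (0 < p0*p0+q0*q0)%Z).
  { rewrite EN in Npos. apply (Z.mul_pos_cancel_r _ (N'*N')); [apply Z.mul_pos_pos; lia|exact Npos]. }
  assert (N2 : (4 <= N'*N')%Z) by (assert (2 <= N')%Z by lia; assert (2*2 <= N'*N')%Z by (apply Z.mul_le_mono_nonneg; lia); lia).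
  set (S := (p0*p0+q0*q0)%Z) in *. rewrite EP in P.
  assert (S * 4 <= S * (N'*N'))%Z by (apply Z.mul_le_mono_nonneg_l; lia).
  lia.
Qed.

Lemma pair_eq (a b c d : Z) : a = c -> b = d -> (a, b) = (c, d).
Proof. intros -> ->; reflexivity. Qed.

Theorem mainTheorem6 (alpha : R) (p q k : Z) :
  hinge_angle alpha ->
  primary_triple alpha p q k ->
  forall a b : Z,
    source_point alpha a b <->
    exists (Q : nat) (l : nat), (Q < 4)%nat /\
      (a, b) = zscale (2 * Z.of_nat l + 1)%Z (mul_iQ Q (p, q)).
Proof.
  intros _ Hprim a b. unfold source_point, in_H, half_int, rot_re, rot_im. split.
  - intros [[n Hn]|[n Hn]].
    + destruct (re_case alpha p q k a b n Hprim Hn) as [j [Ha Hb]].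
      destruct (Z_le_gt_dec 0 j) as [Hj|Hj].
      * exists 0%nat, (Z.to_nat j). split; [lia|]. cbv [zscale mul_iQ mul_i Nat.iter nat_rect fst snd]. rewrite Z2Nat.id by lia.
        apply pair_eq; lia.
      * exists 2%nat, (Z.to_nat (-j-1)). split; [lia|]. cbv [zscale mul_iQ mul_i Nat.iter nat_rect fst snd]. rewrite Z2Nat.id by lia.
        apply pair_eq; [rewrite Ha|rewrite Hb]; ring.
    + assert (Hn' : IZR b * cos alpha - IZR (- a) * sin alpha = IZR n + / 2)
        by (rewrite opp_IZR; lra).
      destruct (re_case alpha p q k b (-a) n Hprim Hn') as [j [Hb Ha]].
      destruct (Z_le_gt_dec 0 j) as [Hj|Hj].
      * exists 1%nat, (Z.to_nat j). split; [lia|]. cbv [zscale mul_iQ mul_i Nat.iter nat_rect fst snd]. rewrite Z2Nat.id by lia.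
        apply pair_eq; lia.
      * exists 3%nat, (Z.to_nat (-j-1)). split; [lia|]. cbv [zscale mul_iQ mul_i Nat.iter nat_rect fst snd]. rewrite Z2Nat.id by lia.
        apply pair_eq; [|rewrite Hb; ring]. 
        replace a with (- (- a))%Z by ring. rewrite Ha. ring.
  - intros [Q [l [HQ E]]].
    set (n := (2 * Z.of_nat l + 1)%Z) in *.
    destruct Hprim as [[_ [H2 _]] _]. unfold rot_re in H2.
    destruct Q as [|[|[|[|Q]]]]; [| | | | lia]; cbv [zscale mul_iQ mul_i Nat.iter nat_rect fst snd] in E; injection E as Ea Eb; rewrite ?Z.opp_involutive in Ea, Eb; subst a b.
    + left. exists (n * k + Z.of_nat l)%Z. rewrite !mult_IZR.
      replace (IZR n * IZR p * cos alpha - IZR n * IZR q * sin alpha)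
        with (IZR n * (IZR p * cos alpha - IZR q * sin alpha)) by ring.
      rewrite H2, plus_IZR, mult_IZR. unfold n. rewrite plus_IZR, mult_IZR. field.
    + right. exists (n * k + Z.of_nat l)%Z. rewrite !mult_IZR, opp_IZR.
      replace (IZR n * - IZR q * sin alpha + IZR n * IZR p * cos alpha)
        with (IZR n * (IZR p * cos alpha - IZR q * sin alpha)) by ring.
      rewrite H2, plus_IZR, mult_IZR. unfold n. rewrite plus_IZR, mult_IZR. field.
    + left. exists (- (n * k + Z.of_nat l) - 1)%Z. rewrite !mult_IZR, !opp_IZR.
      replace (IZR n * - IZR p * cos alpha - IZR n * - IZR q * sin alpha)
        with (- (IZR n * (IZR p * cos alpha - IZR q * sin alpha))) by ring.
      rewrite H2, minus_IZR, opp_IZR, plus_IZR, mult_IZR. unfold n. rewrite plus_IZR, mult_IZR. field.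
    + right. exists (- (n * k + Z.of_nat l) - 1)%Z. rewrite !mult_IZR, !opp_IZR.
      replace (IZR n * - - IZR q * sin alpha + IZR n * - IZR p * cos alpha)
        with (- (IZR n * (IZR p * cos alpha - IZR q * sin alpha))) by ring.
      rewrite H2, minus_IZR, opp_IZR, plus_IZR, mult_IZR. unfold n. rewrite plus_IZR, mult_IZR. field.
Qed.
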